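(* Let $A,B\in M_n(\mathbb{R}_+)$ be nilpotent and let $C=[A,B]_\oplus = AB\oplus BA$. If $AC=BC=0$, then $A$ and $B$ are simultaneously triangularizable.
   Context: Max algebra: $\mathbb{R}_+$ the nonnegative reals with $a\oplus b=\max\{a,b\}$ and ordinary multiplication; for $A,B\in M_n(\mathbb{R}_+)$, $(AB)_{ij}=\max_k a_{ik}b_{kj}$ and $(A\oplus B)_{ij}=\max\{a_{ij},b_{ij}\}$. A matrix is nilpotent if some power (max-product) is $0$. $GL_n(\mathbb{R}_+)$ is the set of matrices invertible under this product (the generalized permutation matrices). $A,B$ are simultaneously triangularizable if there is one $P\in GL_n(\mathbb{R}_+)$ with both $P^{-1}AP$ and $P^{-1}BP$ upper triangular. *)

(* Defs.v *)
From HB Require Import structures.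
From mathcomp Require Import all_boot all_order all_algebra.
From mathcomp Require Import reals.
Set Implicit Arguments. Unset Strict Implicit. Unset Printing Implicit Defensive.
Import Order.TTheory GRing.Theory Num.Theory.
Local Open Scope ring_scope.

Section MaxAlgebra.
Variable R : realType.

Definition nonneg_mx (n : nat) (A : 'M[R]_n) : Prop := forall i j, 0 <= A i j.

(* Max-times product: (A B)_{ij} = max_k a_{ik} b_{kj} (0 is the neutral
   element of max on R_+). *)
Definition maxmul (n : nat) (A B : 'M[R]_n) : 'M[R]_n :=
  \matrix_(i, j) \big[Num.max/0]_(k < n) (A i k * B k j).

Definition maxadd (n : nat) (A B : 'M[R]_n) : 'M[R]_n :=
  \matrix_(i, j) Num.max (A i j) (B i j).

(* Powers for the max product; the identity of the max algebra is the
   usual identity matrix. *)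
Definition maxpow (n : nat) (A : 'M[R]_n) (k : nat) : 'M[R]_n :=
  iter k (maxmul A) 1%:M.

Definition max_nilpotent (n : nat) (A : 'M[R]_n) : Prop :=
  exists k : nat, maxpow A k = 0.

Definition upper_tri (n : nat) (A : 'M[R]_n) : Prop :=
  forall i j : 'I_n, (j < i)%N -> A i j = 0.

(* P in GL_n(R_+): P in M_n(R_+) with a two-sided max-product inverse
   Q in M_n(R_+). *)
Definition max_inverse (n : nat) (P Q : 'M[R]_n) : Prop :=
  nonneg_mx P /\ nonneg_mx Q /\ maxmul P Q = 1%:M /\ maxmul Q P = 1%:M.

Definition sim_triangularizable (n : nat) (A B : 'M[R]_n) : Prop :=
  exists P Pinv : 'M[R]_n, max_inverse P Pinv /\
    upper_tri (maxmul (maxmul Pinv A) P) /\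
    upper_tri (maxmul (maxmul Pinv B) P).

End MaxAlgebra.

(* Main.v *)
Require Import Defs.
From HB Require Import structures.
From mathcomp Require Import all_boot all_order all_algebra.
From mathcomp Require Import reals.
Set Warnings "-notation-overridden,-ambiguous-paths".
Import Order.TTheory GRing.Theory Num.Theory.
Local Open Scope ring_scope.

Fixpoint walk (n : nat) (e : rel 'I_n) (k : nat) (x y : 'I_n) : bool :=
  match k with
  | 0 => x == y
  | k'.+1 => [exists z, e x z && walk n e k' z y]
  end.
Arguments walk {n}.

Lemma walk_split n (e : rel 'I_n) m k x z :
  walk e (m + k)%N x z -> exists y, walk e m x y && walk e k y z.
Proof.
elim: m x => [|m IH] x /=; first by move=> h; exists x; rewrite eqxx.
case/existsP=> y /andP[exy] /IH [w /andP[h1 h2]].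
by exists w; rewrite h2 andbT; apply/existsP; exists y; rewrite exy.
Qed.

Lemma walk_rcons n (e : rel 'I_n) k x y z :
  walk e k x y -> e y z -> walk e k.+1 x z.
Proof.
elim: k x => [|k IH] x /=.
  by move/eqP=> -> eyz; apply/existsP; exists z; rewrite eyz eqxx.
case/existsP=> w /andP[exw hw] eyz; apply/existsP; exists w.
by rewrite exw; exact: (IH _ hw eyz).
Qed.

Arguments walk_rcons {n e k x y z}.
Arguments walk_split {n e m k x z}.

Section S.
Variable R : realType.
Variable n : nat.
Implicit Types A B : 'M[R]_n.

Lemma maxmul_ge A B i j k : A i k * B k j <= maxmul A B i j.
Proof. by rewrite mxE; apply: (le_bigmax _ (fun k => A i k * B k j)). Qed.

Lemma maxmul_pos {A B i j k} : 0 < A i k -> 0 < B k j -> 0 < maxmul A B i j.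
Proof.
move=> h1 h2; apply: lt_le_trans (maxmul_ge A B i j k).
exact: mulr_gt0.
Qed.

Lemma walk_pos A k x y :
  walk (fun u v => 0 < A u v) k x y -> 0 < maxpow A k x y.
Proof.
elim: k x => [|k IH] x /=.
  by move/eqP=> ->; rewrite /maxpow /= mxE eqxx ltr01.
case/existsP=> z /andP[h1 h2].
exact: (maxmul_pos h1 (IH _ h2)).

Qed.

Lemma walk_nil A : max_nilpotent A ->
  exists p, forall m x y, (p <= m)%N -> ~~ walk (fun u v => 0 < A u v) m x y.
Proof.
case=> p hp; exists p => m x y /subnKC <-; apply/negP.
case/walk_split=> w /andP[/walk_pos]; rewrite hp mxE ltxx //.
Qed.

End S.
Arguments maxmul_pos {R n A B i j k}.
Arguments walk_nil {R n A}.

Lemma mixed n (a b : rel 'I_n)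
  (H : forall h i j k, (a h i || b h i) ->
        (a i j && b j k) || (b i j && a j k) -> False) k x z :
  walk (fun u v => a u v || b u v) k.+1 x z ->
  [|| walk a k.+1 x z, walk b k.+1 x z,
      [exists y, a x y && walk b k y z] | [exists y, b x y && walk a k y z]].
Proof.
elim: k x => [|k IH] x.
  case/existsP=> y /andP[/orP[hy|hy] /eqP <-].
    by apply/orP; left; apply/existsP; exists y; rewrite hy eqxx.
  by apply/or4P; constructor 2; apply/existsP; exists y; rewrite hy eqxx.
case/existsP=> y /andP[dxy /IH]; case/or4P.
- move=> hw; case/orP: dxy => hxy.
    by apply/or4P; constructor 1; apply/existsP; exists y; rewrite hxy.
  by apply/or4P; constructor 4; apply/existsP; exists y; rewrite hxy.
- move=> hw; case/orP: dxy => hxy.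
    by apply/or4P; constructor 3; apply/existsP; exists y; rewrite hxy.
  by apply/or4P; constructor 2; apply/existsP; exists y; rewrite hxy.
- case/existsP=> y' /andP[ayy']; case: k IH => [|k] IH.
    move/eqP=> eyz; subst z; case/orP: dxy => hxy.
      apply/or4P; constructor 1; apply/existsP; exists y; rewrite hxy /=.
      by apply/existsP; exists y'; rewrite ayy' eqxx.
    apply/or4P; constructor 4; apply/existsP; exists y; rewrite hxy /=.
    by apply/existsP; exists y'; rewrite ayy' eqxx.
  case/existsP=> y'' /andP[byy _]; exfalso.
  by apply: (H x y y' y'' dxy); rewrite ayy' byy.
- case/existsP=> y' /andP[byy']; case: k IH => [|k] IH.
    move/eqP=> eyz; subst z; case/orP: dxy => hxy.
      apply/or4P; constructor 3; apply/existsP; exists y; rewrite hxy /=.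
      by apply/existsP; exists y'; rewrite byy' eqxx.
    apply/or4P; constructor 2; apply/existsP; exists y; rewrite hxy /=.
    by apply/existsP; exists y'; rewrite byy' eqxx.
  case/existsP=> y'' /andP[ayy _]; exfalso.
  by apply: (H x y y' y'' dxy); rewrite ayy byy' orbT.
Qed.

Section T.
Variable R : realType.
Variable n : nat.

Lemma bigmax01 (c : pred 'I_n) :
  \big[Num.max/0]_(k < n) ((c k)%:R : R) = ([exists k, c k])%:R.
Proof.
case: existsP => [[k ck]|nc].
  apply/le_anti/andP; split.
    by apply: bigmax_le => // i _; case: (c i) => //=; rewrite ler01.
  by apply: le_trans (le_bigmax _ (fun k => ((c k)%:R : R)) k); rewrite ck.
apply/le_anti/andP; split; last exact: bigmax_ge_id.
apply: bigmax_le => // i _; case: (boolP (c i)) => // ci.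
by exfalso; apply: nc; exists i.
Qed.

Lemma bigmax0 (F : 'I_n -> R) : (forall k, F k <= 0) ->
  \big[Num.max/0]_(k < n) F k = 0.
Proof.
move=> h; apply/le_anti/andP; split; last exact: bigmax_ge_id.
by apply: bigmax_le.
Qed.

Lemma perm_tri (ri : 'I_n -> 'I_n) (X : 'M[R]_n) :
  (forall k l, 0 < X k l -> (ri k < ri l)%N) ->
  upper_tri (maxmul (maxmul (\matrix_(i, k) ((ri k == i)%:R : R)) X)
                    (\matrix_(l, j) ((ri l == j)%:R : R))).
Proof.
move=> hX i j ji; rewrite mxE; apply: bigmax0 => l; rewrite !mxE.
case: eqP => [e1|_]; last by rewrite mulr0.
rewrite mulr1; apply: bigmax_le => // k _; rewrite !mxE.
case: eqP => [e2|_]; last by rewrite mul0r.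
rewrite mul1r leNgt; apply/negP => /hX; rewrite e1 e2 ltnNge.
by rewrite (ltnW ji).
Qed.

Lemma perm_inv (ri : 'I_n -> 'I_n) : injective ri ->
  max_inverse (\matrix_(l, j) ((ri l == j)%:R : R))
              (\matrix_(i, k) ((ri k == i)%:R : R)).
Proof.
move=> inj; split; first by move=> i j; rewrite mxE ler0n.
split; first by move=> i j; rewrite mxE ler0n.
split; apply/matrixP => i j; rewrite !mxE.
  rewrite (eq_bigr (fun k => (((ri i == k) && (ri j == k))%:R : R))); last first.
    by move=> k _; rewrite !mxE -natrM mulnb.
  rewrite bigmax01.
  suff -> : [exists k, (ri i == k) && (ri j == k)] = (i == j) by [].
  apply/existsP/eqP => [[k /andP[/eqP e1 /eqP e2]]|->].
    by apply: inj; rewrite e1 e2.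
  by exists (ri j); rewrite eqxx.
rewrite (eq_bigr (fun k => (((ri k == i) && (ri k == j))%:R : R))); last first.
  by move=> k _; rewrite !mxE -natrM mulnb.
rewrite bigmax01.
suff -> : [exists k, (ri k == i) && (ri k == j)] = (i == j) by [].
apply/existsP/eqP => [[k /andP[/eqP <- /eqP e]] //|<-].
by case/codomP: (injF_onto inj i) => k ->; exists k; rewrite eqxx.
Qed.

End T.

Theorem theorem3p9 (R : realType) (n : nat) (A B : 'M[R]_n) :
  nonneg_mx A -> nonneg_mx B ->
  max_nilpotent A -> max_nilpotent B ->
  let C := maxadd (maxmul A B) (maxmul B A) in
  maxmul A C = 0 -> maxmul B C = 0 ->
  sim_triangularizable A B.
Proof.
move=> hA hB nA nB C hAC hBC.
pose a := fun u v : 'I_n => 0 < A u v.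
pose b := fun u v : 'I_n => 0 < B u v.
pose d := fun u v => a u v || b u v.
have H : forall h i j k, (a h i || b h i) ->
    (a i j && b j k) || (b i j && a j k) -> False.
  move=> h i j k hhi hijk.
  have Cpos : 0 < C i k.
    rewrite /C mxE lt_max; case/orP: hijk => /andP[h1 h2].
      by rewrite (maxmul_pos h1 h2).
    by rewrite (maxmul_pos h1 h2) orbT.
  case/orP: hhi => hh.
    by have := maxmul_pos hh Cpos; rewrite hAC mxE ltxx.
  by have := maxmul_pos hh Cpos; rewrite hBC mxE ltxx.
have [pa Pa] := walk_nil nA.
have [pb Pb] := walk_nil nB.
pose p := maxn pa pb.
have Dnil : forall x z, ~~ walk d p.+1 x z.
  move=> x z; apply/negP => /(@mixed _ a b H) /or4P [].
  - apply/negP; apply: Pa; exact: leq_trans (leq_maxl pa pb) (leqnSn _).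
  - apply/negP; apply: Pb; exact: leq_trans (leq_maxr pa pb) (leqnSn _).
  - case/existsP => y /andP[_]; apply/negP; apply: Pb; exact: leq_maxr.
  - case/existsP => y /andP[_]; apply/negP; apply: Pa; exact: leq_maxl.
have P00 y : [exists x, walk d (@ord0 p) x y].
  by apply/existsP; exists y; rewrite /= eqxx.
pose hgt y := [arg max_(k > (@ord0 p) | [exists x, walk d k x y]) k].
have hgtP y : [exists x, walk d (hgt y) x y].
  by rewrite /hgt; case: arg_maxnP => //; exact: P00.
have hgt_max y (k : 'I_p.+1) : [exists x, walk d k x y] -> (k <= hgt y)%N.
  by rewrite /hgt; case: arg_maxnP => [|k' _ hm]; [exact: P00 | exact: hm].
have hgt_lt : forall y z, d y z -> (hgt y < hgt z)%N.
  move=> y z dyz; case/existsP: (hgtP y) => x wk.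
  have wk1 := walk_rcons wk dyz.
  have kp : ((hgt y).+1 < p.+1)%N.
    rewrite ltnS ltn_neqAle -ltnS ltn_ord andbT; apply/eqP => ek.
    by move: (Dnil x z); rewrite -ek wk1.
  apply: (hgt_max z (Ordinal kp)); apply/existsP; exists x; exact: wk1.
pose key y := (hgt y * n + y)%N.
have key_inj : injective key.
  move=> x y e; apply: val_inj; have := congr1 (modn ^~ n) e.
  by rewrite /key !modnMDl !modn_small.
have d_key x y : d x y -> (key x < key y)%N.
  move/hgt_lt => hxy; rewrite /key.
  apply: (@leq_trans ((hgt x).+1 * n)).
    by rewrite mulSn [(n + _)%N]addnC ltn_add2l ltn_ord.
  exact: leq_trans (leq_mul hxy (leqnn n)) (leq_addr _ _).
pose r x := #|[set y | (key y < key x)%N]|.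
have r_lt x : (r x < n)%N.
  suff hp : [set y | (key y < key x)%N] \proper [set: 'I_n].
    by have := proper_card hp; rewrite cardsT card_ord.
  rewrite properT; apply/eqP => e.
  have : x \in [set y | (key y < key x)%N] by rewrite e inE.
  by rewrite inE ltnn.
have r_mono x y : (key x < key y)%N -> (r x < r y)%N.
  move=> kxy; apply: proper_card; apply/properP; split.
    apply/subsetP => z; rewrite !inE => h; exact: ltn_trans h kxy.
  by exists x; rewrite !inE ?kxy ?ltnn.
pose ri x := Ordinal (r_lt x).
have ri_inj : injective ri.
  move=> x y /(congr1 val) /= e; apply: key_inj.
  case: (ltngtP (key x) (key y)) => // h.
    by have := r_mono _ _ h; rewrite e ltnn.
  by have := r_mono _ _ h; rewrite e ltnn.
exists (\matrix_(l, j) ((ri l == j)%:R : R)), (\matrix_(i, k) ((ri k == i)%:R : R)).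
split; first exact: perm_inv.
split; apply: perm_tri => k l hkl; apply: r_mono; apply: d_key;
  by rewrite /d /a /b hkl ?orbT.
Qed.
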